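(* Let $w$ be a bounded positive function on $\mathbb{T}$ such that $\log w$ is integrable, and fix $0<\delta<1$. If there is $\varepsilon\in(0,\delta)$ such that $\operatorname{dist}\big(L_w^+(\delta),L_w^-(\varepsilon)\big)>0$, then $w$ is an apical Helson--Szegő weight at level $\delta$.
   Context: $\mathbb{T}$ is the unit circle with normalized Lebesgue measure. For a bounded $\psi$ and $0\le\delta\le1$, $L_\psi^+(\delta)=\{e^{i\theta}\in\mathbb{T}: |\psi(e^{i\theta})|\ge\|\psi\|_\infty\delta\}$ and $L_\psi^-(\delta)=\{e^{i\theta}\in\mathbb{T}: |\psi(e^{i\theta})|<\|\psi\|_\infty\delta\}$; $\operatorname{dist}$ is the distance between subsets of $\mathbb{T}$. For real $v\in L^1(\mathbb{T})$, $\tilde v$ denotes its conjugate function. A bounded positive function $w$ on $\mathbb{T}$ is an apical Helson--Szegő weight at level $\delta$ if $w=\exp(u+v)$ where $u\in L^\infty(\mathbb{T})$ and $v\in L^1(\mathbb{T})$ are real-valued and $\operatorname{ess\,sup}_{L_w^+(\delta)}|\tilde v|<\pi/2$. *)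

(* Defs.v *)
(* The unit circle T is modelled by 2*pi-periodic
   functions on R; the normalized measure on T corresponds to (1/(2 pi)) times
   Lebesgue measure on one period. Null sets / ess sup do not depend on the
   normalisation. *)
From HB Require Import structures.
From mathcomp Require Import all_boot all_order all_algebra.
From mathcomp Require Import all_classical all_reals all_analysis ess_sup_inf.
Set Implicit Arguments. Unset Strict Implicit. Unset Printing Implicit Defensive.
Import Order.TTheory GRing.Theory Num.Theory.
Import numFieldNormedType.Exports.
Local Open Scope classical_set_scope.
Local Open Scope ring_scope.

Section defs.
Variable R : realType.
Notation leb := (@lebesgue_measure R).

Definition periodic2pi (f : R -> R) := forall x, f (x + 2 * pi) = f x.

(* ||w||_oo : essential supremum of |w| (over R, equivalently over a period) *)
Definition sup_norm (w : R -> R) : R := fine (ess_sup leb (fun x => (`|w x|)%:E)).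

Definition Lplus (w : R -> R) (d : R) : set R :=
  [set x | sup_norm w * d <= `|w x|].
Definition Lminus (w : R -> R) (d : R) : set R :=
  [set x | `|w x| < sup_norm w * d].

(* chordal distance |e^{ia} - e^{ib}| between points of T *)
Definition chord (a b : R) : R :=
  Num.sqrt ((cos a - cos b) ^+ 2 + (sin a - sin b) ^+ 2).

Definition dist_pos (A B : set R) : Prop :=
  exists2 r : R, 0 < r & forall a b, A a -> B b -> r <= chord a b.

Definition conj_trunc (v : R -> R) (x : R) (e : R) : R :=
  (2 * pi)^-1 * fine (\int[leb]_(t in [set t : R | (e <= `|t| <= pi)%R])
                        (v (x - t) * (cos (t / 2) / sin (t / 2)))%:E)%E.

Definition conj_at (v : R -> R) (x l : R) : Prop :=
  conj_trunc v x e @[e --> 0^'+] --> l.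

Definition apical_HS (w : R -> R) (d : R) : Prop :=
  exists u v : R -> R,
    [/\ periodic2pi u /\ periodic2pi v,
        (measurable_fun setT u /\ exists M : R, {ae leb, forall x, `|u x| <= M}),
        leb.-integrable `[(- pi)%R, pi] (EFin \o v),
        {ae leb, forall x, w x = expR (u x + v x)} &
        (exists2 c : R, c < pi / 2 &
          {ae leb, forall x, Lplus w d x ->
             exists l, conj_at v x l /\ `|l| <= c})].
End defs.

(* Main.v *)
Require Import Defs.
From HB Require Import structures.
From mathcomp Require Import all_boot all_order all_algebra.
From mathcomp Require Import all_classical all_reals all_analysis.
From mathcomp Require Import ess_sup_inf lra ring measurable_realfun.
Set Implicit Arguments. Unset Strict Implicit. Unset Printing Implicit Defensive.
Import Order.TTheory GRing.Theory Num.Theory.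
Import numFieldNormedType.Exports.
Local Open Scope classical_set_scope.
Local Open Scope ring_scope.

Definition reflf (R : realType) (a : R) : R -> R :=
  fun x => a - x.

Lemma mrefl (R : realType) (a : R) : measurable_fun setT (reflf a).
Proof. by apply: measurable_realfun.continuous_measurable_fun; move=> x; apply: continuousB; [exact: cst_continuous|exact: cvg_id]. Qed.

HB.instance Definition _ (R : realType) (a : R) :=
  isMeasurableFun.Build _ _ _ _ (reflf a) (mrefl a).

Section S.
Variable R : realType.
Notation leb := (@lebesgue_measure R).

Lemma leb_refl (a : R) (A : set R) : measurable A ->
  pushforward leb (reflf a : _ -> measurableTypeR R) A = leb A.
Proof.
move=> mA; apply/esym/lebesgue_measure_unique => //=; first by move=> ? ? ?; apply: (mrefl a). move=> _ _ [[c d]] _ <-.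
rewrite /pushforward.
have -> : (reflf a) @^-1` `]c, d]%classic = `[a - d, a - c[%classic.
  apply/seteqP; split => x /=; rewrite !in_itv /= /reflf.
    by move=> /andP[h1 h2]; apply/andP; split; lra.
  by move=> /andP[h1 h2]; apply/andP; split; lra.
rewrite !lebesgue_measure_itv /= !lte_fin.
have -> : (a - d < a - c) = (c < d) by apply/idP/idP; lra.
case: ifP => // _; rewrite -!EFinB; congr (_%:E); lra.
Qed.

Local Open Scope ereal_scope.
Lemma integral_refl (a : R) (D : set R) (f : R -> \bar R) :
  measurable D -> measurable_fun D f -> (forall x, D x -> 0 <= f x) ->
  \int[leb]_(x in D) f x = \int[leb]_(x in reflf a @^-1` D) f (a - x)%R.
Proof.
move=> mD mf f0.
transitivity (\int[pushforward leb (reflf a : _ -> measurableTypeR R)]_(x in D) f x).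
  apply: eq_measure_integral => //=; first exact: mrefl.
  by move=> _ A mA AS; rewrite -(leb_refl a mA).
have h := @ge0_integral_pushforward _ _ (measurableTypeR R) (measurableTypeR R) R (reflf a) (mrefl a) leb D f mD mf.
rewrite h //; by move=> y /set_mem; exact: f0.
Qed.
Local Close Scope ereal_scope.

Lemma per_nat (f : R -> R) : periodic2pi f -> forall (n : nat) x, f (x + 2 * pi * n%:R) = f x.
Proof.
move=> pf n x; have := @periodicn _ _ f (2 * pi) pf n x.
by rewrite mulr_natr.
Qed.

Lemma per_int (f : R -> R) : periodic2pi f -> forall (k : int) x, f (x + 2 * pi * k%:~R) = f x.
Proof.
move=> pf [n|n] x; first by rewrite pmulrn per_nat.
rewrite NegzE mulrNz mulrN -(per_nat pf n.+1 (x - _)) subrK //.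
Qed.

Lemma per_red (f : R -> R) : periodic2pi f -> forall x, exists2 y, 0 <= y <= 2 * pi &
  forall t, f (x - t) = f (y - t).
Proof.
move=> pf x; have pi0 := pi_gt0 R.
set k := Num.floor (x / (2 * pi)).
exists (x - 2 * pi * k%:~R).
  have /andP[h1 h2] := floor_itv (x / (2 * pi)).
  rewrite -/k in h1 h2.
  rewrite intrD in h2.
  set q := x / (2 * pi) in h1 h2.
  have hq : x = q * (2 * pi) by rewrite /q mulfVK //; apply/eqP; lra.
  have e1 : 0 <= (q - k%:~R) * (2 * pi) by apply: mulr_ge0; lra.
  have e2 : 0 <= (k%:~R + 1 - q) * (2 * pi) by apply: mulr_ge0; lra.
  apply/andP; split; nra.
move=> t; rewrite -(per_int pf k (x - 2 * pi * k%:~R - t)); congr f; lra.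
Qed.

Local Open Scope ereal_scope.
Lemma shift_bound (g : R -> R) : periodic2pi g -> measurable_fun setT g ->
  (forall x, (0 <= g x)%R) -> forall y, (0 <= y <= 2 * pi)%R ->
  \int[leb]_(t in `[(- pi)%R, pi]) (g (y - t))%:E <=
  \int[leb]_(t in `[(- pi)%R, pi]) (g t)%:E + \int[leb]_(t in `[(- pi)%R, pi]) (g t)%:E.
Proof.
move=> pg mg g0 y /andP[y0 y2]; have pi0 := pi_gt0 R.
have mG (D : set R) : measurable D -> measurable_fun D (EFin \o g).
  by move=> mD; apply/measurable_EFinP; exact: measurable_funS mg.
have G0 (D : set R) : forall x, D x -> 0 <= (g x)%:E by move=> x _; rewrite lee_fin.
rewrite (_ : \int[leb]_(t in `[(- pi)%R, pi]) (g (y - t))%:E =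
   \int[leb]_(t in `[(y - pi)%R, (y + pi)%R]) (g t)%:E); last first.
  rewrite [RHS](integral_refl y) //; [|exact: mG|by move=> *; rewrite lee_fin].
  congr (integral _ _ _); apply/seteqP; split => t /=; rewrite !in_itv /= /reflf;
    move=> /andP[h1 h2]; apply/andP; split; lra.
apply: (@le_trans _ _ (\int[leb]_(t in `[(- pi)%R, (3 * pi)%R]) (g t)%:E)).
  apply: ge0_subset_integral => //; [exact: mG|by move=> *; rewrite lee_fin|].
  by move=> t /=; rewrite !in_itv /= => /andP[h1 h2]; apply/andP; split; lra.
have -> : `[(- pi)%R, (3 * pi)%R]%classic = `[(- pi)%R, pi]%classic `|` `]pi, (3 * pi)%R]%classic :> set R.
  apply/seteqP; split => t /=; rewrite !in_itv /=.
    move=> /andP[h1 h2]; case: (lerP t pi) => h3; [left|right]; apply/andP; split => //; lra.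
  by case=> /andP[h1 h2]; apply/andP; split; lra.
rewrite ge0_integral_setU //; [|by apply: mG; apply: measurableU|by move=> *; rewrite lee_fin|]; last first.
  by rewrite disj_set2E; apply/eqP/seteqP; split => t //=; rewrite !in_itv /= => -[/andP[h1 h2] /andP[h3 h4]]; lra.
apply: leeD => //.
apply: (@le_trans _ _ (\int[leb]_(t in `[pi, (3 * pi)%R]) (g t)%:E)).
  apply: ge0_subset_integral => //; [exact: mG|by move=> *; rewrite lee_fin|].
  by move=> t /=; rewrite !in_itv /= => /andP[h1 h2]; apply/andP; split; lra.
rewrite (integral_refl (2 * pi)) //; [|exact: mG|by move=> *; rewrite lee_fin].
have -> : reflf (2 * pi) @^-1` `[pi, (3 * pi)%R] = `[(- pi)%R, pi]%classic :> set R.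
  apply/seteqP; split => t /=; rewrite !in_itv /= /reflf;
    move=> /andP[h1 h2]; apply/andP; split; lra.
rewrite [X in _ <= X](integral_refl 0) //; [|exact: mG|by move=> *; rewrite lee_fin].
have -> : reflf 0 @^-1` `[(- pi)%R, pi] = `[(- pi)%R, pi]%classic :> set R.
  apply/seteqP; split => t /=; rewrite !in_itv /= /reflf;
    move=> /andP[h1 h2]; apply/andP; split; lra.
rewrite le_eqVlt; apply/orP; left; apply/eqP; apply: eq_integral => t _; congr (_%:E).
by rewrite -[in RHS]pg; congr g; ring.
Qed.

Lemma sup_norm_pos (w : R -> R) : (exists M : R, forall x, (w x <= M)%R) ->
  (forall x, (0 < w x)%R) -> (0 < sup_norm w)%R.
Proof.
move=> [M wM] w0.
set E := ess_sup leb (fun x => (`|w x|)%:E).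
have EM : E <= M%:E.
  apply/ess_supP; apply: aeW => x; rewrite lee_fin gtr0_norm //.
rewrite /sup_norm -/E ltNge; apply/negP => S0.
have E0 : E <= 0.
  move: EM S0; case: E => [r| |] //= _; by rewrite lee_fin.
have /ess_supP [N [mN N0 sN]] := E0.
have sub : `[0%R, 1%R]%classic `<=` N.
  move=> x _; apply: sN => /=; rewrite lee_fin normr_le0 => /eqP wx.
  by have := w0 x; rewrite wx ltxx.
have h : leb `[0%R, 1%R]%classic <= leb N.
  exact: (le_measure leb (mem_set (measurable_itv `[0%R, 1%R])) (mem_set mN) sub).
move: h; rewrite N0 lebesgue_measure_itv /= lte_fin ltr01 sube0 lee_fin.
by rewrite ler10.
Qed.

Local Close Scope ereal_scope.
Lemma choose_e0 (r : R) : 0 < r -> exists e0 : R,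
  [/\ 0 < e0, e0 < pi & forall t, `|t| < e0 -> 2 - 2 * cos t < r ^+ 2].
Proof.
move=> r0; set y := Num.max (1 - r ^+ 2 / 2) 0.
have y0 : 0 <= y by rewrite le_max lexx orbT.
have y1 : y < 1.
  rewrite gt_max; apply/andP; split; [|exact: ltr01].
  have : 0 < r ^+ 2 by apply: exprn_gt0.
  move=> ?; lra.
exists (acos y); split.
- by apply: acos_gt0; apply/andP; split => //; lra.
- by apply: acos_ltpi; apply/andP; split; lra.
move=> t tl.
have cy : cos (acos y) = y by apply: acosK; rewrite in_itv /=; apply/andP; split; lra.
have ha : 0 <= acos y <= pi by apply/andP; split; [apply: acos_ge0|apply: acos_lepi]; apply/andP; split; lra.
have ht : `|t| <= pi by move: ha => /andP[_ ?]; apply: le_trans (ltW tl) _.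
have : cos (acos y) < cos `|t|.
  rewrite ltr_cos // in_itv /=; apply/andP; split => //.
have : 1 - r ^+ 2 / 2 <= y by rewrite le_max lexx.
rewrite cos_norm cy; lra.
Qed.

Lemma chordE (a t : R) : chord a (a - t) = Num.sqrt (2 - 2 * cos t).
Proof.
rewrite /chord cosB sinB; congr Num.sqrt.
have h1 := cos2Dsin2 a; have h2 := cos2Dsin2 t.
set ca := cos a in h1 *; set sa := sin a in h1 *; set ct := cos t in h2 *; set st := sin t in h2 *.
have -> : (ca - (ca * ct + sa * st)) ^+ 2 + (sa - (sa * ct - ca * st)) ^+ 2 =
  (ca ^+ 2 + sa ^+ 2) * ((1 - ct) ^+ 2 + st ^+ 2) by ring.
rewrite h1 mul1r.
have -> : (1 - ct) ^+ 2 + st ^+ 2 = 1 - 2 * ct + (ct ^+ 2 + st ^+ 2) by ring.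
rewrite h2; ring.
Qed.

Lemma sin_half_abs (t : R) : `|t| <= pi -> `|sin (t / 2)| = sin (`|t| / 2).
Proof.
move=> tp; have pi0 := pi_gt0 R.
case: (lerP 0 t) => t0.
  rewrite ger0_norm //; [by rewrite ger0_norm|].
  by apply: sin_ge0_pi; apply/andP; split; rewrite ger0_norm in tp; lra.
rewrite [`|sin _|]ltr0_norm; first by rewrite (ltr0_norm t0) mulNr sinN.
rewrite -oppr_gt0 -sinN -mulNr; apply: sin_gt0_pi; apply/andP; split;
  rewrite ltr0_norm in tp; lra.
Qed.

Lemma cot_bound (e0 t : R) : 0 < e0 < pi -> e0 <= `|t| <= pi ->
  [/\ 0 < sin (e0 / 2), sin (t / 2) != 0 & `|cos (t / 2) / sin (t / 2)| <= (sin (e0 / 2))^-1].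
Proof.
move=> /andP[e00 e0p] /andP[te tp]; have pi0 := pi_gt0 R.
have s0 : 0 < sin (e0 / 2) by apply: sin_gt0_pihalf; apply/andP; split; lra.
have st : sin (e0 / 2) <= `|sin (t / 2)|.
  rewrite sin_half_abs //.
  rewrite le_eqVlt; apply/orP; case: (eqVneq e0 `|t|) => [->|ne]; [by left|right].
  rewrite ltr_sin ?in_itv /=; last 2 first.
  - by apply/andP; split; lra.
  - by apply/andP; split; lra.
  have : e0 < `|t| by rewrite lt_def eq_sym ne te.
  move=> ?; lra.
have ps : 0 < `|sin (t / 2)| by apply: lt_le_trans st.
split => //; first by rewrite -normr_gt0.
apply: (@le_trans _ _ (`|sin (t / 2)|^-1)).
  rewrite normrM normfV -[X in _ <= X]mul1r; apply: ler_wpM2r; [by rewrite invr_ge0 ltW|exact: cos_max].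
by rewrite lef_pV2 ?posrE.
Qed.

Definition vfun (w : R -> R) (eta : R) (x : R) : R := if w x < eta then ln (w x) else 0.

Lemma vfun_meas (w : R -> R) eta : measurable_fun setT w -> measurable_fun setT (vfun w eta).
Proof.
move=> mw; apply: measurable_fun_ifT.
- by apply: measurable_fun_ltr => //; exact: measurable_cst.
- exact: measurableT_comp (@measurable_ln R) mw.
- exact: measurable_cst.
Qed.

Lemma vfun_le (w : R -> R) eta x : `|vfun w eta x| <= `|ln (w x)|.
Proof. by rewrite /vfun; case: ifP => // _; rewrite normr0. Qed.

Local Open Scope ereal_scope.
Lemma small_tail (w : R -> R) (eta0 d0 : R) : measurable_fun setT w ->
  (forall x, (0 < w x)%R) ->
  leb.-integrable `[(- pi)%R, pi] (fun x => (ln (w x))%:E) -> (0 < eta0)%R -> (0 < d0)%R ->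
  exists2 eta : R, (0 < eta <= eta0)%R &
    \int[leb]_(x in `[(- pi)%R, pi]) (`|vfun w eta x|)%:E < d0%:E.
Proof.
move=> mw w0 iL e0 d00.
pose eta_ (n : nat) := (eta0 / n.+1%:R)%R.
pose f_ (n : nat) := fun x => (`|vfun w (eta_ n) x|)%:E.
have mf n : measurable_fun `[(- pi)%R, pi] (f_ n).
  apply/measurable_EFinP; apply: measurableT_comp; first exact: normr_measurable.
  by apply: measurable_funS (vfun_meas _ mw).
have := @dominated_convergence _ _ R leb `[(- pi)%R, pi] (measurable_itv _) f_ (cst 0)
  (fun x => (`|ln (w x)|)%:E) mf (measurable_cst _).
case.
- apply: aeW => x _.
  apply: cvg_near_cst; near=> n.
  rewrite /f_ /vfun ifF ?normr0 //.
  apply/negbTE; rewrite -leNgt /eta_ ler_pdivrMr //.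
  near: n; apply: filterS (nbhs_infty_ger (eta0 / w x)) => n.
  rewrite ler_pdivrMr // -natr1 => hn.
  have := w0 x; nra.
- exact: (integrable_abse iL).
- by apply: aeW => x n _; rewrite /f_ /= lee_fin normr_id vfun_le.
move=> _ _; rewrite integral0 => /fine_cvgP [hfin hcv].
have hlt := cvgr_lt _ hcv _ d00.
have [N _ HN] := filterI hfin (hlt _).
exists (eta_ N).
  rewrite /eta_; apply/andP; split; first by rewrite divr_gt0.
  by rewrite ler_pdivrMr //; apply: ler_peMr; [exact: ltW | by rewrite ler1n].
have [h1 h2] := HN N (leqnn N).
by move: h1 h2 => /= h1 h2; rewrite -(fineK h1) lte_fin.
Unshelve. all: by end_near.
Qed.



Local Close Scope ereal_scope.
Lemma cont_sinhalf : continuous (fun t : R => sin (t / 2)).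
Proof.
move=> t; apply: (@continuous_comp _ _ _ (fun t : R => t / 2) sin).
  by apply: continuousM; [exact: cvg_id|exact: cvg_cst].
exact: continuous_sin.
Qed.

Lemma cont_coshalf : continuous (fun t : R => cos (t / 2)).
Proof.
move=> t; apply: (@continuous_comp _ _ _ (fun t : R => t / 2) cos).
  by apply: continuousM; [exact: cvg_id|exact: cvg_cst].
exact: continuous_cos.
Qed.

Definition Aset (e : R) : set R := [set t : R | (e <= `|t| <= pi)%R].

Lemma Aset_meas e : measurable (Aset e).
Proof.
have -> : Aset e = (fun t : R => `|t|) @^-1` `[e, pi]%classic.
  by apply/seteqP; split => t /=; rewrite in_itv.
rewrite -[X in measurable X]setTI.
by apply: (@normr_measurable R setT) => //; exact: measurable_itv.
Qed.

Lemma cot_meas (a : R) : 0 < a < pi ->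
  measurable_fun (Aset a) (fun t => cos (t / 2) / sin (t / 2)).
Proof.
move=> ha.
pose O := (fun t : R => sin (t / 2)) @^-1` [set y : R | y != 0].
have oO : open O by apply: open_comp; [move=> t _; exact: cont_sinhalf|exact: open_neq].
apply: (@measurable_funS _ _ _ _ O); first exact: open_measurable.
  by move=> t At; have [_ ? _] := cot_bound ha At.
apply: open_continuous_measurable_fun => // t /set_mem Ot.
apply: (@continuousM _ _ (fun t : R => cos (t / 2)) (fun t : R => (sin (t / 2))^-1)).
  exact: cont_coshalf.
by apply: continuousV => //; exact: cont_sinhalf.
Qed.

Lemma trunc_const (v : R -> R) x a : (forall t, `|t| < a -> v (x - t) = 0) ->
  forall e, e <= a -> conj_trunc v x e = conj_trunc v x a.
Proof.
move=> hv e ea; rewrite /conj_trunc; congr (_ * fine _).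
rewrite [LHS]integral_mkcond [RHS]integral_mkcond; apply: eq_integral => t _.
rewrite /patch /=.
have [ta|ta] := lerP a `|t|.
  have [tp|tp] := lerP `|t| pi.
    by rewrite !mem_set //; apply/andP; split => //; apply: le_trans ea ta.
  by rewrite !memNset //= => /andP[_ /(lt_le_trans tp)]; rewrite ltxx.
rewrite [in RHS]memNset; last by move=> /andP[/(lt_le_trans ta)]; rewrite ltxx.
by case: ifP => // _; rewrite hv // mul0r.
Qed.

Lemma conj_at_const (v : R -> R) x a : 0 < a -> (forall t, `|t| < a -> v (x - t) = 0) ->
  conj_at v x (conj_trunc v x a).
Proof.
move=> a0 hv; rewrite /conj_at; apply: cvg_near_cst.
near=> e; apply: trunc_const => //.
near: e; exact: nbhs_right_ltW.
Unshelve. all: by end_near.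
Qed.

Lemma trunc_bound (v : R -> R) x a (Ir : R) : periodic2pi v -> measurable_fun setT v ->
  0 < a < pi ->
  (\int[leb]_(t in `[(- pi)%R, pi]) (`|v t|)%:E = Ir%:E)%E ->
  `|conj_trunc v x a| <= (2 * pi)^-1 * ((sin (a / 2))^-1 * (Ir + Ir)).
Proof.
move=> pv mv ha hI; have pi0 := pi_gt0 R.
set B := (sin (a / 2))^-1.
have B0 : 0 < B.
  by have [s0 _ _] := @cot_bound a pi ha (ltac:(rewrite gtr0_norm //; case/andP: ha => _ ?; apply/andP; split => //; exact: ltW)); rewrite invr_gt0.
set h := fun t => (v (x - t) * (cos (t / 2) / sin (t / 2)))%:E.
have mvx : measurable_fun setT (fun t : R => v (x - t)).
  exact: (measurableT_comp mv (mrefl x)).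
have mvr : measurable_fun (Aset a) (fun t => v (x - t) * (cos (t / 2) / sin (t / 2))).
  apply: measurable_realfun.measurable_funM; last exact: cot_meas.
  exact: measurable_funS mvx.
have mh : measurable_fun (Aset a) h by apply/measurable_EFinP.
have mvxa (D : set R) : measurable D -> measurable_fun D (fun t => (B * `|v (x - t)|)%:E).
  move=> mD; apply/measurable_EFinP; apply: measurable_realfun.measurable_funM.
    exact: measurable_cst.
  apply: measurableT_comp; first exact: normr_measurable.
  exact: measurable_funS mvx.
have key : (`|\int[leb]_(t in Aset a) h t| <= (B * (Ir + Ir))%:E)%E.
  apply: (le_trans (le_abse_integral leb (Aset_meas a) mh)).
  apply: (@le_trans _ _ (\int[leb]_(t in Aset a) (B * `|v (x - t)|)%:E)%E).
    apply: ge0_le_integral => //.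
    - exact: Aset_meas.
    - have : measurable_fun (Aset a) (EFin \o ((fun r : R => `|r|) \o (fun t => v (x - t) * (cos (t / 2) / sin (t / 2))))).
        apply/measurable_EFinP; apply: measurableT_comp => //; exact: normr_measurable.
      by [].
    - exact: mvxa (Aset_meas a).
    - move=> t At; rewrite /h /= lee_fin normrM [B * _]mulrC.
      apply: ler_wpM2l => //; have [_ _ ?] := cot_bound ha At; by [].
  apply: (@le_trans _ _ (\int[leb]_(t in `[(- pi)%R, pi]) (B * `|v (x - t)|)%:E)%E).
    apply: ge0_subset_integral => //; [exact: Aset_meas|exact: mvxa|move=> t _; rewrite lee_fin; exact: mulr_ge0 (ltW B0) (normr_ge0 _)|].
    by move=> t /andP[_ ht]; rewrite /= in_itv /= -ler_norml.
  under eq_integral do rewrite EFinM.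
  rewrite ge0_integralZl_EFin //; last 2 first.
  - apply/measurable_EFinP; apply: measurableT_comp; first exact: normr_measurable.
    exact: measurable_funS mvx.
  - exact: ltW.
  rewrite EFinM EFinD; apply: lee_wpmul2l; first by rewrite lee_fin ltW.
  have [y hy hvy] := per_red pv x.
  under eq_integral do rewrite hvy.
  rewrite -hI.
  apply: (shift_bound (g := fun t => `|v t|)) => //.
  - by move=> z /=; rewrite pv.
  - apply: measurableT_comp => //; exact: normr_measurable.
rewrite /conj_trunc normrM gtr0_norm; last by rewrite invr_gt0 mulr_gt0.
apply: ler_wpM2l; first by rewrite invr_ge0 mulr_ge0 // ltW.
move: key; rewrite -/(Aset a).
by case: (\int[leb]_(t in Aset a) h t)%E => [r| |] //=; rewrite lee_fin.
Qed.
End S.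

Theorem lemma1 (R : realType) (w : R -> R) (delta : R) :
  periodic2pi w ->
  measurable_fun setT w ->
  (exists M : R, forall x, w x <= M) ->
  (forall x, 0 < w x) ->
  (@lebesgue_measure R).-integrable `[(- pi)%R, pi] (fun x => (ln (w x))%:E) ->
  0 < delta < 1 ->
  (exists eps : R, 0 < eps < delta /\
     dist_pos (Lplus w delta) (Lminus w eps)) ->
  apical_HS w delta.
Proof.
move=> pw mw [M wM] w0 iL /andP[dl0 dl1] [eps [/andP[ep0 epd] [r r0 hr]]].
have pi0 := pi_gt0 R.
have S0 := sup_norm_pos (ex_intro _ M wM) w0.
have [a [a0 api ha]] := choose_e0 r0.
have aA : (a <= `|(pi : R)| <= pi) by rewrite gtr0_norm // (ltW api) lexx.
have [sa0 _ _] := @cot_bound R a pi (ltac:(by apply/andP)) aA.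
set B := (sin (a / 2))^-1.
have B0 : 0 < B by rewrite invr_gt0.
have iB0 : 0 < B^-1 by rewrite invr_gt0.
have [eta /andP[eta0 etaS] hI] := small_tail mw w0 iL (mulr_gt0 ep0 S0) iB0.
set v := vfun w eta.
have pv : periodic2pi v by move=> x; rewrite /v /vfun pw.
have mv : measurable_fun setT v by exact: vfun_meas.
set I := (\int[lebesgue_measure]_(x in `[(- pi)%R, pi]) (`|v x|)%:E)%E in hI.
have I0 : (0 <= I)%E by apply: integral_ge0 => x _; rewrite lee_fin.
have Ifin : I \is a fin_num by rewrite ge0_fin_numE // (lt_trans hI) // ltey.
set Ir := fine I.
have hI' : I = Ir%:E by rewrite fineK.
have Ir_lt : Ir < B^-1 by rewrite -lte_fin -hI'.
exists (fun x => ln (w x) - v x), v; split.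
- by split => // x; rewrite pw pv.
- split.
    apply: measurable_realfun.measurable_funB => //.
    exact: measurableT_comp (@measurable_ln R) mw.
  exists (Num.max `|ln eta| `|ln M|); apply: aeW => x.
  rewrite /v /vfun; case: ifPn => h; first by rewrite subrr normr0 le_max normr_ge0.
  rewrite subr0; move: h; rewrite -leNgt => h.
  have wx0 := w0 x.
  have h1 : ln eta <= ln (w x) by rewrite ler_ln ?posrE.
  have h2 : ln (w x) <= ln M.
    by rewrite ler_ln ?posrE //; apply: lt_le_trans (wM x).
  have m1 : `|ln eta| <= Num.max `|ln eta| `|ln M| by rewrite le_max lexx.
  have m2 : `|ln M| <= Num.max `|ln eta| `|ln M| by rewrite le_max lexx orbT.
  have n1 := ler_norm (ln M); have n2 := ler_norm (- ln eta); rewrite normrN in n2.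
  rewrite ler_norml; apply/andP; split; lra.
- apply: (@le_integrable _ _ _ lebesgue_measure _ (measurable_itv _) (EFin \o v) (fun x => (ln (w x))%:E)) => //.
    by apply/measurable_EFinP; exact: measurable_funS mv.
  by move=> x _ /=; rewrite lee_fin vfun_le.
- by apply: aeW => x; rewrite subrK lnK // posrE.
exists ((2 * pi)^-1 * (B * (Ir + Ir))).
  have BI : B * Ir < 1 by rewrite -(mulfV (lt0r_neq0 B0)) ltr_pM2l.
  have -> : (2 * pi)^-1 * (B * (Ir + Ir)) = (B * Ir) / pi.
    by field; apply/eqP; lra.
  rewrite ltr_pdivrMr //.
  have : 2 <= pi := pi_ge2 R.
  nra.
apply: aeW => x Lx.
exists (conj_trunc v x a); split.
  apply: conj_at_const => // t ta.
  rewrite /v /vfun; case: ifPn => // hlt; exfalso.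
  have Lm : Lminus w eps (x - t).
    rewrite /Lminus /= ger0_norm; last exact: ltW.
    by apply: lt_le_trans hlt _; rewrite mulrC.
  have := hr x (x - t) Lx Lm.
  rewrite chordE.
  have ht := ha t ta.
  have : Num.sqrt (2 - 2 * cos t) < r.
    by rewrite -[X in _ < X](@gtr0_norm _ r) // -sqrtr_sqr ltr_sqrt // exprn_gt0.
  lra.
apply: trunc_bound => //; by apply/andP.
Qed.
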